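(* Let $K$ be a field, $S=K[t_1,\ldots,t_s]$, and let $\mathbb{X}$ be a finite subset of the projective space $\mathbb{P}^{s-1}$ over $K$ with $|\mathbb{X}|\geq 2$. Then $\delta_{\mathbb{X}}(d)=\delta_{I(\mathbb{X})}(d)\geq 1$ for all $d\geq 1$.
   Context: $S$ has the standard grading, $S_d$ is its degree $d$ part. $I(\mathbb{X})$ is the vanishing ideal of $\mathbb{X}$: the ideal generated by all homogeneous polynomials vanishing at all points of $\mathbb{X}$. For homogeneous $f$, $V_{\mathbb{X}}(f)$ is the set of points of $\mathbb{X}$ at which $f$ vanishes. $\delta_{\mathbb{X}}(d)$ is the minimum distance of the projective Reed–Muller-type code $C_{\mathbb{X}}(d)$, i.e. $\delta_{\mathbb{X}}(d)=\min\{|\mathbb{X}|-|V_{\mathbb{X}}(f)|: f\in S_d,\ f\notin I(\mathbb{X})\}$ (the minimum number of points of $\mathbb{X}$ at which a degree-$d$ form not vanishing on all of $\mathbb{X}$ is nonzero). For a nonzero graded ideal $I$ with Hilbert function $H_I(d)=\dim_K(S_d/I_d)$ and $k=\dim(S/I)$, $\deg(S/I)=(k-1)!\lim_{d\to\infty}H_I(d)/d^{k-1}$ if $k\geq1$ and $\dim_K(S/I)$ if $k=0$. With $\mathcal{F}_d=\{f\in S_d: f\notin I,\ (I\colon f)\neq I\}$, the minimum distance function is $\delta_I(d)=\deg(S/I)-\max\{\deg(S/(I,f)): f\in\mathcal{F}_d\}$ if $\mathcal{F}_d\neq\emptyset$ and $\delta_I(d)=\deg(S/I)$ otherwise. *)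

(* Defs.v *)
From HB Require Import structures.
From mathcomp Require Import all_boot all_order all_algebra.
From mathcomp Require Import mpoly.
From Stdlib Require Import ClassicalEpsilon.

Set Implicit Arguments.
Unset Strict Implicit.
Unset Printing Implicit Defensive.

Import Order.TTheory GRing.Theory Num.Theory.
Local Open Scope ring_scope.

(* If no extremal element exists the value is unspecified; for all    *)
(* uses below the extremum exists (finite / bounded sets).             *)

Definition nat_min (P : nat -> Prop) : nat :=
  epsilon (inhabits 0%N) (fun n => P n /\ forall m, P m -> (n <= m)%N).

Definition nat_max (P : nat -> Prop) : nat :=
  epsilon (inhabits 0%N) (fun n => P n /\ forall m, P m -> (m <= n)%N).

Definition rat_max (P : rat -> Prop) : rat :=
  epsilon (inhabits 0) (fun x => P x /\ forall y, P y -> y <= x).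

Definition rat_the (P : rat -> Prop) : rat :=
  epsilon (inhabits 0) P.

Section Ideals.
Variables (K : fieldType) (s : nat).
Local Notation S := {mpoly K[s]}.

Definition is_ideal (J : S -> Prop) : Prop :=
  [/\ J 0, (forall f g, J f -> J g -> J (f + g)) &
      (forall r f, J f -> J (r * f))].

Definition is_prime_ideal (P : S -> Prop) : Prop :=
  [/\ is_ideal P, ~ P 1 & forall f g, P (f * g) -> P f \/ P g].

Definition ideal_gen (A : S -> Prop) : S -> Prop :=
  fun f => exists r : seq (S * S),
    (forall p, p \in r -> A p.2) /\ f = \sum_(p <- r) p.1 * p.2.

Definition ideal_add (I : S -> Prop) (f : S) : S -> Prop :=
  ideal_gen (fun g => I g \/ g = f).

Definition colon (I : S -> Prop) (f : S) : S -> Prop :=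
  fun g => I (g * f).

(* Krull dimension of S/I: the supremum of lengths k of chains
   P_0 < P_1 < ... < P_k of prime ideals of S containing I. *)
Definition prime_chain (I : S -> Prop) (k : nat) : Prop :=
  exists P : nat -> S -> Prop,
    (forall i, (i <= k)%N -> is_prime_ideal (P i) /\ forall g, I g -> P i g) /\
    (forall i, (i < k)%N ->
       (forall g, P i g -> P i.+1 g) /\ exists g, P i.+1 g /\ ~ P i g).

Definition krull_dim_quot (I : S -> Prop) : nat := nat_max (prime_chain I).

Definition indep_mod (I : S -> Prop) (m : nat) (fs : m.-tuple S) : Prop :=
  forall c : m.-tuple K,
    I (\sum_(i < m) tnth c i *: tnth fs i) -> forall i, tnth c i = 0.

(* Hilbert function H_I(d) = dim_K (S_d / I_d). *)
Definition hilbert_fun (I : S -> Prop) (d : nat) : nat :=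
  nat_max (fun m => exists fs : m.-tuple S,
    (forall i, tnth fs i \is d.-homog) /\ indep_mod I fs).

Definition quot_dim (I : S -> Prop) : nat :=
  nat_max (fun m => exists fs : m.-tuple S, indep_mod I fs).

Definition rat_lim (u : nat -> rat) (L : rat) : Prop :=
  forall eps : rat, 0 < eps ->
    exists N, forall d, (N <= d)%N -> `|u d - L| < eps.

Definition deg_quot (I : S -> Prop) : rat :=
  let k := krull_dim_quot I in
  if k is k'.+1 then
    (k'`!)%:R * rat_the (rat_lim (fun d => (hilbert_fun I d)%:R / (d ^ k')%N%:R))
  else (quot_dim I)%:R.

Definition Fd (I : S -> Prop) (d : nat) (f : S) : Prop :=
  [/\ f \is d.-homog, ~ I f & ~ (forall g, colon I f g <-> I g)].

Definition delta_I (I : S -> Prop) (d : nat) : rat :=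
  if excluded_middle_informative (exists f, Fd I d f)
  then deg_quot I - rat_max (fun x => exists f, Fd I d f /\ x = deg_quot (ideal_add I f))
  else deg_quot I.

(* Points of projective space P^{s-1}: nonzero vectors of K^s up to    *)
(* nonzero scalars.  A finite set X of projective points is given by a *)
(* sequence of representatives of pairwise distinct points.            *)

Definition proj_eq (v w : 'rV[K]_s) : Prop := exists c : K, c != 0 /\ v = c *: w.

Definition proj_set (X : seq 'rV[K]_s) : Prop :=
  (forall v, v \in X -> v != 0) /\
  (forall i j, (i < size X)%N -> (j < size X)%N ->
     proj_eq (nth 0 X i) (nth 0 X j) -> i = j).

Definition ev (v : 'rV[K]_s) (f : S) : K := meval (fun i => v 0 i) f.

Definition vanishing_ideal (X : seq 'rV[K]_s) : S -> Prop :=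
  ideal_gen (fun f => (exists e, f \is e.-homog) /\ forall v, v \in X -> ev v f = 0).

Definition card_zeros (X : seq 'rV[K]_s) (f : S) : nat :=
  count (fun v => ev v f == 0) X.

Definition delta_X (X : seq 'rV[K]_s) (d : nat) : nat :=
  nat_min (fun n => exists f : S,
    [/\ f \is d.-homog, ~ vanishing_ideal X f & n = (size X - card_zeros X f)%N]).

End Ideals.

(* Main.v *)
Require Import Defs.
From HB Require Import structures.
From mathcomp Require Import all_boot all_order all_algebra.
From mathcomp Require Import mpoly ring zify.
From Stdlib Require Import ClassicalEpsilon Classical FunctionalExtensionality PropExtensionality.
Set Implicit Arguments. Unset Strict Implicit. Unset Printing Implicit Defensive.
Import Order.TTheory GRing.Theory Num.Theory.
Local Open Scope ring_scope.

Lemma nat_maxE (P : nat -> Prop) n : P n -> (forall m, P m -> (m <= n)%N) -> nat_max P = n.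
Proof.
move=> Pn Hn; rewrite /nat_max.
have [] := epsilon_spec (inhabits 0%N) (fun k => P k /\ forall m, P m -> (m <= k)%N)
  (ex_intro _ n (conj Pn Hn)).
set k := epsilon _ _ => Pk Hk.
by apply/eqP; rewrite eqn_leq Hn // Hk.
Qed.

Lemma nat_minE (P : nat -> Prop) n : P n -> (forall m, P m -> (n <= m)%N) -> nat_min P = n.
Proof.
move=> Pn Hn; rewrite /nat_min.
have [] := epsilon_spec (inhabits 0%N) (fun k => P k /\ forall m, P m -> (k <= m)%N)
  (ex_intro _ n (conj Pn Hn)).
set k := epsilon _ _ => Pk Hk.
by apply/eqP; rewrite eqn_leq Hn // Hk.
Qed.

Lemma rat_maxE (P : rat -> Prop) a : P a -> (forall b, P b -> b <= a) -> rat_max P = a.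
Proof.
move=> Pa Ha; rewrite /rat_max.
have [] := epsilon_spec (inhabits 0) (fun k => P k /\ forall m, P m -> m <= k)
  (ex_intro _ a (conj Pa Ha)).
set k := epsilon _ _ => Pk Hk.
by apply/eqP; rewrite eq_le Ha // Hk.
Qed.

Lemma rat_theE (P : rat -> Prop) a : P a -> (forall b, P b -> b = a) -> rat_the P = a.
Proof.
move=> Pa Ha; rewrite /rat_the; apply: Ha.
exact: (epsilon_spec (inhabits 0) P (ex_intro _ a Pa)).
Qed.

Lemma max_exists (P : nat -> Prop) B : (exists n, P n) -> (forall n, P n -> (n <= B)%N) ->
  exists n, P n /\ forall m, P m -> (m <= n)%N.
Proof.
elim: B => [|B IH] [n Pn] HB.
  by exists n; split=> // m /HB; have := HB _ Pn; lia.
case: (classic (P B.+1)) => [PB|nPB]; first by exists B.+1.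
apply: IH; first by exists n.
move=> m Pm; have := HB _ Pm; rewrite leq_eqVlt ltnS => /orP [/eqP E|//].
by rewrite E in Pm.
Qed.

Lemma min_exists (P : nat -> Prop) : (exists n, P n) -> exists n, P n /\ forall m, P m -> (n <= m)%N.
Proof.
move=> [n Pn].
suff H: forall N n, (n <= N)%N -> P n -> exists n, P n /\ forall m, P m -> (n <= m)%N by exact: (H n n (leqnn n) Pn).
elim=> [|N IH] k hk Pk.
  by exists k; split=> // m _; move: hk; rewrite leqn0 => /eqP ->.
case: (classic (exists m, (m < k)%N /\ P m)) => [[m [hm Pm]]|H].
  by apply: (IH m) => //; rewrite -ltnS (leq_trans hm).
exists k; split=> // m Pm; rewrite leqNgt; apply/negP => hm; apply: H; eauto.
Qed.

Section Main.
Variables (K : fieldType) (s : nat).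
Local Notation S := {mpoly K[s]}.
Local Notation vec := 'rV[K]_s.
Local Notation msize p := (mmeasure mdeg p).

Definition phi (v : vec) (f : S) : {poly K} := mmap (@polyC K) (fun i => v 0 i *: 'X) f.

Lemma prodXZ (a : 'I_s -> K) (k : 'I_s -> nat) :
  \prod_(i < s) (a i *: 'X) ^+ k i = (\prod_(i < s) a i ^+ k i) *: 'X^(\sum_(i < s) k i).
Proof.
elim/big_rec3: _ => [|i x y z _ ->]; first by rewrite scale1r.
rewrite exprZn -!mul_polyC exprD rmorphM /=; ring.
Qed.

Lemma phi_homog v e (f : S) : f \is e.-homog -> phi v f = ev v f *: 'X^e.
Proof.
move=> /dhomogP hf; rewrite /phi /mmap /ev mevalE scaler_suml.
apply: eq_big_seq => m mm; rewrite /mmap1 prodXZ -mdegE hf //.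
by rewrite mul_polyC scalerA.
Qed.

Lemma phi_pi v (g : S) k : (msize g <= k)%N ->
  phi v g = \sum_(e < k) ev v (pihomog mdeg e g) *: 'X^e.
Proof.
move=> hk; rewrite {1}(pihomog_partitionE hk) /phi rmorph_sum; apply: eq_bigr => e _.
by apply: phi_homog; apply: pihomogP.
Qed.

Lemma coef_phi v (g : S) e : (phi v g)`_e = ev v (pihomog mdeg e g).
Proof.
have hk : (msize g <= maxn (msize g) e.+1)%N by rewrite leq_maxl.
have he : (e < maxn (msize g) e.+1)%N by rewrite leq_maxr.
rewrite (phi_pi v hk) coef_sum (bigD1 (Ordinal he)) //= big1 ?addr0.
  by rewrite coefZ coefXn eqxx mulr1.
by move=> i /eqP hi; rewrite coefZ coefXn; case: eqP => [E|]; [case: hi; apply: val_inj|rewrite mulr0].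
Qed.

Lemma ev_pi v (g : S) : ev v g = \sum_(e < msize g) (phi v g)`_e.
Proof.
rewrite {1}(pihomog_partitionE (leqnn (msize g))) /ev raddf_sum.
by apply: eq_bigr => e _; rewrite coef_phi.
Qed.

Lemma ev_phi0 v (g : S) : phi v g = 0 -> ev v g = 0.
Proof. by move=> h; rewrite ev_pi h big1 // => e _; rewrite coef0. Qed.

Lemma homog_phi0 v (g : S) D : g \is D.-homog -> phi v g = 0 -> ev v g = 0.
Proof.
move=> hg; rewrite (phi_homog v hg) => /eqP; rewrite scaler_eq0 => /orP [/eqP //|].
by rewrite expf_eq0 polyX_eq0 andbF.
Qed.

Lemma phiC v c : phi v c%:MP = c%:P.
Proof. by rewrite /phi mmapC. Qed.


Definition IX (X : seq vec) (g : S) : Prop := forall x, x \in X -> phi x g = 0.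

Lemma phi_sum_prod v (r : seq (S * S)) :
  phi v (\sum_(p <- r) p.1 * p.2) = \sum_(p <- r) phi v p.1 * phi v p.2.
Proof. by rewrite /phi rmorph_sum; apply: eq_bigr => p _; rewrite rmorphM. Qed.

Lemma vanishing_IX (X : seq vec) : vanishing_ideal X = IX X.
Proof.
apply: functional_extensionality => g; apply: propositional_extensionality; split.
  move=> [r [Hr ->]] x xX; rewrite phi_sum_prod big_seq big1 // => p pr.
  have [[e he] hv] := Hr p pr.
  by rewrite (phi_homog x he) hv // scale0r mulr0.
move=> Hg; exists [seq (1, pihomog mdeg e g) | e <- iota 0 (msize g)]; split.
  move=> p /mapP [e _ ->] /=; split; first by exists e; apply: pihomogP.
  by move=> v vX; rewrite -coef_phi Hg // coef0.
rewrite big_map {1}(pihomog_partitionE (leqnn (msize g))).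
rewrite -(big_mkord xpredT (fun e => pihomog mdeg e g)) /index_iota subn0.
by apply: eq_bigr => e _ /=; rewrite mul1r.
Qed.

Definition Jadd (X : seq vec) (f : S) (g : S) : Prop :=
  exists a h, IX X a /\ g = a + h * f.

Lemma IX_ideal X : is_ideal (IX X).
Proof.
split.
- by move=> x _; rewrite /phi raddf0.
- by move=> f g Hf Hg x xX; rewrite /phi raddfD /= -/(phi x f) -/(phi x g) Hf // Hg // addr0.
- by move=> r f Hf x xX; rewrite /phi rmorphM /= -/(phi x f) Hf // mulr0.
Qed.

Lemma ideal_add_Jadd X f : ideal_add (IX X) f = Jadd X f.
Proof.
have [I0 ID IM] := IX_ideal X.
apply: functional_extensionality => g; apply: propositional_extensionality; split.
  move=> [r [Hr ->]]; elim: r Hr => [|p r IH] Hr.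
    by exists 0, 0; rewrite big_nil mul0r addr0.
  have [a [h [Ha E]]] := IH (fun q qr => Hr q (mem_behead (s := p :: r) qr)).
  rewrite big_cons E.
  case: (Hr p (mem_head _ _)) => [Hp|->].
    by exists (p.1 * p.2 + a), h; split; [apply: ID => //; apply: IM|rewrite addrA].
  by exists a, (p.1 + h); split => //; rewrite mulrDl; ring.
move=> [a [h [Ha ->]]]; exists [:: (1, a); (h, f)]; split.
  by move=> p; rewrite !inE => /orP [/eqP ->|/eqP ->]; [left|right].
by rewrite !big_cons big_nil /= mul1r addr0.
Qed.


Definition good (Y : seq vec) : Prop :=
  [/\ uniq Y, forall y, y \in Y -> y != 0 &
      forall y y', y \in Y -> y' \in Y -> y != y' -> ~ proj_eq y y'].

Lemma proj_set_good X : proj_set X -> good X.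
Proof.
move=> [Hnz Hinj].
have key : forall i j, (i < size X)%N -> (j < size X)%N ->
    proj_eq (nth 0 X i) (nth 0 X j) -> nth 0 X i = nth 0 X j.
  by move=> i j hi hj /(Hinj _ _ hi hj) ->.
split => //.
  apply/(uniqP 0) => i j hi hj E; apply: Hinj => //.
  by exists 1; rewrite oner_neq0 scale1r E.
move=> y y' yX y'X neq hp; move/negP: neq; apply.
rewrite -(nth_index 0 yX) -(nth_index 0 y'X) in hp *.
by apply/eqP; apply: key => //; rewrite index_mem.
Qed.

Lemma good_filter Y (P : pred vec) : good Y -> good (filter P Y).
Proof.
move=> [u nz sep]; split; first exact: filter_uniq.
  by move=> y; rewrite mem_filter => /andP [_ /nz].
by move=> y y'; rewrite !mem_filter => /andP [_ yY] /andP [_ y'Y]; apply: sep.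
Qed.

Lemma nz_coord (y : vec) : y != 0 -> exists k, y 0 k != 0.
Proof.
move=> ny; apply: NNPP => H; move/negP: ny; apply; apply/eqP/rowP => k.
rewrite mxE; apply/eqP; apply: NNPP => hk; apply: H; exists k; exact/negP.
Qed.

Lemma evM v (f g : S) : ev v (f * g) = ev v f * ev v g.
Proof. by rewrite /ev rmorphM. Qed.
Lemma evZ v c (f : S) : ev v (c *: f) = c * ev v f.
Proof. by rewrite /ev mevalZ. Qed.
Lemma evB v (f g : S) : ev v (f - g) = ev v f - ev v g.
Proof. by rewrite /ev mevalB. Qed.
Lemma evD v (f g : S) : ev v (f + g) = ev v f + ev v g.
Proof. by rewrite /ev mevalD. Qed.
Lemma evXn v (f : S) k : ev v (f ^+ k) = ev v f ^+ k.
Proof. by rewrite /ev rmorphXn. Qed.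
Lemma ev1 v : ev v (1 : S) = 1.
Proof. by rewrite /ev meval1. Qed.
Lemma evC v c : ev v (c%:MP : S) = c.
Proof. by rewrite /ev mevalC. Qed.
Lemma ev_sum v I (r : seq I) (P : pred I) (F : I -> S) :
  ev v (\sum_(i <- r | P i) F i) = \sum_(i <- r | P i) ev v (F i).
Proof. by rewrite /ev raddf_sum. Qed.

Lemma evX v i : ev v ('X_i : S) = v 0 i.
Proof. by rewrite /ev mevalXU. Qed.

Lemma Xhomog1 i : ('X_i : S) \is 1.-homog.
Proof. by rewrite dhomogX; apply/eqP; exact: mdeg1. Qed.

Lemma sep_lin (y y' : vec) : y != 0 -> y' != 0 -> ~ proj_eq y y' ->
  exists L : S, [/\ L \is 1.-homog, ev y L != 0 & ev y' L = 0].
Proof.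
move=> ny ny' np.
case: (classic (exists i j, y 0 i * y' 0 j != y 0 j * y' 0 i)) => [[i [j hij]]|H].
  exists (y' 0 j *: 'X_i - y' 0 i *: 'X_j); split.
  - by rewrite rpredB // rpredZ // Xhomog1.
  - rewrite /ev mevalB !mevalZ !mevalXU; apply: contra hij.
    by rewrite subr_eq0 => /eqP E; apply/eqP; rewrite mulrC E mulrC.
  - by rewrite /ev mevalB !mevalZ !mevalXU mulrC subrr.
exfalso; apply: np.
have H' : forall i j, y 0 i * y' 0 j = y 0 j * y' 0 i.
  move=> i j; apply/eqP; apply: NNPP => hn; apply: H; exists i, j; exact/negP.
have [k hk] := nz_coord ny'.
exists (y 0 k / y' 0 k); split.
  rewrite mulf_neq0 ?invr_eq0 //; apply: contra ny => /eqP yk0.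
  apply/eqP/rowP => i; rewrite mxE; apply/eqP.
  by have := H' i k; rewrite yk0 mul0r => /eqP; rewrite mulf_eq0 (negbTE hk) orbF.
apply/rowP => i; rewrite !mxE; have := H' i k.
move=> E; apply: (mulIf hk); rewrite E; field; exact: hk.
Qed.

Lemma sep_prod (y : vec) (l : seq vec) :
  (forall y', y' \in l -> exists L : S, [/\ L \is 1.-homog, ev y L != 0 & ev y' L = 0]) ->
  exists p : S, [/\ p \is (size l).-homog, ev y p != 0 & forall y', y' \in l -> ev y' p = 0].
Proof.
elim: l => [|y1 l IH] H.
  by exists 1; split => //; [exact: dhomog1|rewrite /ev meval1 oner_neq0].
have [p [hp ep zp]] := IH (fun y' hy => H y' (mem_behead (s := y1 :: l) hy)).
have [L [hL eL zL]] := H y1 (mem_head _ _).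
exists (L * p); split.
- by have := dhomogM hL hp; rewrite add1n.
- by rewrite evM mulf_neq0.
- move=> y'; rewrite inE evM => /orP [/eqP ->|/zp ->].
    by rewrite zL mul0r.
  by rewrite mulr0.
Qed.

Lemma basis Y D y : good Y -> y \in Y -> (size Y <= D)%N ->
  exists e : S, [/\ e \is D.-homog, ev y e = 1 & forall y', y' \in Y -> y' != y -> ev y' e = 0].
Proof.
move=> [u nz sep] yY hD.
set l := filter (fun y' => y' != y) Y.
have hl : (size l <= D)%N by rewrite (leq_trans _ hD) // size_filter count_size.
have [p [hp ep zp]] : exists p : S, [/\ p \is (size l).-homog, ev y p != 0 &
    forall y', y' \in l -> ev y' p = 0].
  apply: sep_prod => y'; rewrite mem_filter => /andP [ny' y'Y].
  apply: sep_lin; [exact: nz|exact: nz|].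
  by apply: sep => //; rewrite eq_sym.
have [k hk] := nz_coord (nz _ yY).
set q := p * 'X_k ^+ (D - size l).
have hq : q \is D.-homog.
  by have := dhomogM hp (dhomogMn (D - size l) (Xhomog1 k)); rewrite mul1n subnKC.
have eq0 : ev y q != 0.
  by rewrite /q evM evXn evX mulf_neq0 // expf_neq0.
exists ((ev y q)^-1 *: q); split.
- exact: rpredZ.
- by rewrite evZ mulVf.
- move=> y' y'Y ny'; rewrite evZ /q [ev y' _]evM zp ?mul0r ?mulr0 //.
  by rewrite /l mem_filter ny'.
Qed.

Definition basisE (Y : seq vec) D (y : vec) : S :=
  epsilon (inhabits 0) (fun e => [/\ e \is D.-homog, ev y e = 1 &
     forall y', y' \in Y -> y' != y -> ev y' e = 0]).

Lemma basisE_spec Y D y : good Y -> y \in Y -> (size Y <= D)%N ->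
  [/\ basisE Y D y \is D.-homog, ev y (basisE Y D y) = 1 &
     forall y', y' \in Y -> y' != y -> ev y' (basisE Y D y) = 0].
Proof.
move=> gY yY hD; rewrite /basisE.
have [e he] := basis gY yY hD.
exact: (epsilon_spec (inhabits (0:S)) (fun e => [/\ e \is D.-homog, ev y e = 1 &
     forall y', y' \in Y -> y' != y -> ev y' e = 0]) (ex_intro _ e he)).
Qed.

Lemma interp Y D (c : vec -> K) : good Y -> (size Y <= D)%N ->
  exists h : S, h \is D.-homog /\ forall y, y \in Y -> ev y h = c y.
Proof.
move=> gY hD; exists (\sum_(y <- Y) c y *: basisE Y D y); split.
  rewrite big_seq; apply: rpred_sum => y yY; apply: rpredZ.
  by have [] := basisE_spec gY yY hD.
move=> y' y'Y; have [u _ _] := gY.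
rewrite ev_sum (bigD1_seq y') //= evZ.
have [_ -> _] := basisE_spec gY y'Y hD; rewrite mulr1 big_seq_cond big1 ?addr0 //.
move=> y /andP [yY ny]; rewrite evZ.
by have [_ _ ->] := basisE_spec gY yY hD; rewrite ?mulr0 // eq_sym.
Qed.


Lemma hilbert_eq (J : S -> Prop) (Y : seq vec) D : good Y -> (size Y <= D)%N ->
  (forall g, J g -> forall y, y \in Y -> phi y g = 0) ->
  (forall g, g \is D.-homog -> (forall y, y \in Y -> ev y g = 0) -> J g) ->
  hilbert_fun J D = size Y.
Proof.
move=> gY hD HJ1 HJ2; have [uY _ _] := gY; apply: nat_maxE.
  exists [tuple basisE Y D (nth 0 Y i) | i < size Y]; split.
    move=> i; rewrite tnth_mktuple.
    by have [] := basisE_spec gY (mem_nth 0 (ltn_ord i)) hD.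
  move=> c Hc i; set g := \sum_(_ < _) _ in Hc.
  have yi : nth 0 Y i \in Y by exact: mem_nth.
  have hg : g \is D.-homog.
    apply: rpred_sum => j _; apply: rpredZ; rewrite tnth_mktuple.
    by have [] := basisE_spec gY (mem_nth 0 (ltn_ord j)) hD.
  have := homog_phi0 hg (HJ1 g Hc _ yi).
  rewrite ev_sum (bigD1 i) //= evZ tnth_mktuple.
  have [_ -> _] := basisE_spec gY yi hD; rewrite mulr1 big1 ?addr0 // => j nji.
  rewrite evZ tnth_mktuple.
  have yj : nth 0 Y j \in Y by exact: mem_nth.
  have [_ _ ->] := basisE_spec gY yj hD; rewrite ?mulr0 //.
  by rewrite nth_uniq // eq_sym.
move=> m [fs [hom ind]]; rewrite leqNgt; apply/negP => hm.
pose A := \matrix_(i < m, j < size Y) ev (nth 0 Y j) (tnth fs i).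
have nk : kermx A != 0.
  apply/negP => /eqP k0; have := mxrank_ker A; rewrite k0 mxrank0.
  have := rank_leq_col A; lia.
have [i ni] : exists i, row i (kermx A) != 0.
  apply: NNPP => H; move/negP: nk; apply; apply/eqP/row_matrixP => i.
  rewrite row0; apply/eqP; apply: NNPP => hn; apply: H; exists i; exact/negP.
set u := row i (kermx A) in ni.
have uA : u *m A = 0 by rewrite /u -row_mul mulmx_ker row0.
pose c := [tuple u 0 j | j < m].
have hg : \sum_(j < m) tnth c j *: tnth fs j \is D.-homog.
  by apply: rpred_sum => j _; apply: rpredZ.
have Hv : forall y, y \in Y -> ev y (\sum_(j < m) tnth c j *: tnth fs j) = 0.
  move=> y yY; have hk : (index y Y < size Y)%N by rewrite index_mem.
  have Ey : y = nth 0 Y (Ordinal hk) by rewrite /= nth_index.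
  have := congr1 (fun M : 'M[K]_(1, size Y) => M 0 (Ordinal hk)) uA; rewrite !mxE => <-.
  rewrite ev_sum; apply: eq_bigr => j _; by rewrite evZ tnth_mktuple /A !mxE /= nth_index.
have Hc := ind c (HJ2 _ hg Hv).
move/negP: ni; apply; apply/eqP/rowP => j; have := Hc j; rewrite tnth_mktuple !mxE.
by [].
Qed.


Definition Lp (v : vec) (g : S) : Prop := phi v g = 0.
Definition Mp (v : vec) (g : S) : Prop := ev v g = 0.

Lemma Lp_prime v : is_prime_ideal (Lp v).
Proof.
rewrite /Lp; split.
- split.
  + by rewrite /phi raddf0.
  + by move=> f g Hf Hg; rewrite /phi raddfD /= -/(phi v f) -/(phi v g) Hf Hg addr0.
  + by move=> r f Hf; rewrite /phi rmorphM /= -/(phi v f) Hf mulr0.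
- by rewrite /phi rmorph1; apply/eqP; rewrite oner_neq0.
- move=> f g; rewrite /phi rmorphM /= -/(phi v f) -/(phi v g) => /eqP.
  by rewrite mulf_eq0 => /orP [/eqP|/eqP]; [left|right].
Qed.

Lemma Mp_prime v : is_prime_ideal (Mp v).
Proof.
rewrite /Mp; split.
- split.
  + by rewrite /ev meval0.
  + by move=> f g Hf Hg; rewrite evD Hf Hg addr0.
  + by move=> r f Hf; rewrite evM Hf mulr0.
- by rewrite ev1; apply/eqP; rewrite oner_neq0.
- move=> f g; rewrite evM => /eqP.
  by rewrite mulf_eq0 => /orP [/eqP|/eqP]; [left|right].
Qed.

Lemma phiX v i : phi v ('X_i : S) = v 0 i *: 'X.
Proof. by rewrite (phi_homog v (Xhomog1 i)) evX expr1. Qed.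

Lemma chain1 (J : S -> Prop) (y : vec) : y != 0 -> (forall g, J g -> phi y g = 0) ->
  prime_chain J 1.
Proof.
move=> ny HJ.
exists (fun i => if i == 0%N then Lp y else Mp y); split.
  move=> i _; case: (i == 0%N).
    by split; [exact: Lp_prime|exact: HJ].
  by split; [exact: Mp_prime|move=> g /HJ /ev_phi0].
move=> i; rewrite ltnS leqn0 => /eqP -> /=; split.
  by move=> g /ev_phi0.
have [k hk] := nz_coord ny.
exists ('X_k - (y 0 k)%:MP); split.
  by rewrite /Mp evB evX evC subrr.
rewrite /Lp /phi raddfB /= -/(phi y 'X_k) -/(phi y (y 0 k)%:MP) phiX phiC => /eqP.
apply/negP; apply: contra hk => /eqP E.
by have := congr1 (fun p : {poly K} => p`_1) E; rewrite coefB coefZ coefX coefC /= mulr1 subr0 coef0 => ->.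
Qed.

Lemma ideal_sub (Q : S -> Prop) f g : is_ideal Q -> Q f -> Q g -> Q (f - g).
Proof.
move=> [_ D M] Hf Hg; apply: D => //.
by rewrite -mulN1r; apply: M.
Qed.

Lemma prime_contains_line (X : seq vec) (P : S -> Prop) : is_prime_ideal P ->
  (forall g, IX X g -> P g) -> exists x, x \in X /\ forall g, phi x g = 0 -> P g.
Proof.
move=> [[P0 PD PM] P1 Pp]; rewrite /IX.
elim: X => [|x l IH] H.
  by exfalso; apply: P1; apply: H.
case: (classic (forall g, phi x g = 0 -> P g)) => [Hx|Hx].
  by exists x; split => //; exact: mem_head.
have [gx [hgx ngx]] : exists gx, phi x gx = 0 /\ ~ P gx.
  apply: NNPP => hn; apply: Hx => g hg; apply: NNPP => pg; apply: hn; exists g; done.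
have [x' [x'l Hx']] : exists x', x' \in l /\ forall g, phi x' g = 0 -> P g.
  apply: IH => g Hg.
  have : P (gx * g).
    apply: H => z; rewrite inE => /orP [/eqP ->|zl]; rewrite /phi rmorphM /=.
      by rewrite -/(phi x gx) hgx mul0r.
    by rewrite -/(phi z g) Hg // mulr0.
  by case/Pp.
by exists x'; split => //; rewrite inE x'l orbT.
Qed.


Lemma phi_lift (x : vec) : x != 0 -> forall q : {poly K}, exists q' : S, phi x q' = q.
Proof.
move=> nx q; have [k hk] := nz_coord nx.
set T : S := ((x 0 k)^-1)%:MP * 'X_k.
have hT : phi x T = 'X.
  by rewrite /T /phi rmorphM /= -/(phi x 'X_k) -/(phi x _) phiX phiC mul_polyC scalerA mulVf // scale1r.
exists (\sum_(i < size q) (q`_i)%:MP * T ^+ i).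
rewrite /phi rmorph_sum /= -[RHS]coefK poly_def; apply: eq_bigr => i _.
by rewrite rmorphM rmorphXn /= -/(phi x T) -/(phi x _) hT phiC mul_polyC.
Qed.

Lemma line_chain (x : vec) (Q0 Q1 Q2 : S -> Prop) : x != 0 ->
  is_prime_ideal Q1 -> is_ideal Q2 -> ~ Q2 1 ->
  (forall g, phi x g = 0 -> Q0 g) -> (forall g, Q0 g -> Q1 g) -> (forall g, Q1 g -> Q2 g) ->
  (exists g, Q1 g /\ ~ Q0 g) -> (exists g, Q2 g /\ ~ Q1 g) -> False.
Proof.
move=> nx [I1 Q1n1 Q1p] I2 Q2n1 H0 H01 H12 [g1 [Q1g1 nQ0g1]] [h [Q2h nQ1h]].
have lift := phi_lift nx.
have congrQ : forall Q : S -> Prop, is_ideal Q -> (forall g, phi x g = 0 -> Q g) ->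
    forall g g', Q g -> phi x g' = phi x g -> Q g'.
  move=> Q IQ HQ g g' Qg E; have [_ D _] := IQ.
  have -> : g' = g + (g' - g) by rewrite addrC subrK.
  apply: D => //; apply: HQ; rewrite /phi raddfB /= -/(phi x g) -/(phi x g') E subrr //.
have L1 : forall g, phi x g = 0 -> Q1 g by move=> g /H0 /H01.
have L2 : forall g, phi x g = 0 -> Q2 g by move=> g /L1 /H12.
have [_ D1 M1] := I1; have [_ D2 M2] := I2.
have phiM : forall f g, phi x (f * g) = phi x f * phi x g by move=> f g; rewrite /phi rmorphM.
suff: forall n g0, (size (phi x g0) <= n)%N -> Q1 g0 -> phi x g0 != 0 -> False.
  move=> H; apply: (H (size (phi x g1)) g1 (leqnn _) Q1g1); apply/eqP => E; apply: nQ0g1; apply: H0; exact: E.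
elim=> [|n IH] g0 hs Q1g0 np.
  by move: hs; rewrite leqn0 size_poly_eq0 (negbTE np).
set p := phi x g0 in hs np.
case: (classic (exists g, [/\ Q1 g, phi x g != 0 & (size (phi x g) < size p)%N])).
  by move=> [g [Qg ng sg]]; apply: (IH g) => //; rewrite -ltnS (leq_trans sg).
move=> Hmin.
have divQ1 : forall g, Q1 g -> p %| phi x g.
  move=> g Qg; apply/modp_eq0P; apply: NNPP => hne.
  have [a' ha'] := lift (phi x g %/ p).
  apply: Hmin; exists (g - a' * g0); split.
  - by apply: ideal_sub => //; apply: M1.
  - have -> : phi x (g - a' * g0) = phi x g %% p.
      by rewrite /phi raddfB /= -/(phi x g) -/(phi x (a' * g0)) phiM ha' {1}(divp_eq (phi x g) p) addrC addKr.
    exact/eqP.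
  - have -> : phi x (g - a' * g0) = phi x g %% p.
      by rewrite /phi raddfB /= -/(phi x g) -/(phi x (a' * g0)) phiM ha' {1}(divp_eq (phi x g) p) addrC addKr.
    by rewrite ltn_modp.
set w := phi x h.
set e := egcdp p w.
set G := e.1 * p + e.2 * w.
have hG : gcdp p w %= G by exact: egcdpE.
have Gp : G %| p by rewrite -(eqp_dvdl _ hG) dvdp_gcdl.
have Gw : G %| w by rewrite -(eqp_dvdl _ hG) dvdp_gcdr.
have [u' hu'] := lift e.1; have [v' hv'] := lift e.2.
set G' := u' * g0 + v' * h.
have Q2G' : Q2 G' by apply: D2; apply: M2 => //; apply: H12.
have pG' : phi x G' = G by rewrite /phi raddfD /= -/(phi x (u' * g0)) -/(phi x (v' * h)) !phiM hu' hv'.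
set t := p %/ G.
have ptG : p = t * G by rewrite /t divpK.
have [t' ht'] := lift t.
have : Q1 (t' * G').
  by apply: (congrQ Q1 I1 L1 g0) => //; rewrite phiM ht' pG' -ptG.
case/Q1p => [Qt|QG].
  have pt : p %| t by rewrite -ht'; apply: divQ1.
  have nt : t != 0 by apply: contraNneq np => t0; rewrite -/p ptG t0 mul0r.
  have nG : G != 0 by apply: contraNneq np => G0; rewrite -/p ptG G0 mulr0.
  have := dvdp_leq nt pt; rewrite {1}ptG size_mul // => hsz.
  have sG : (size G <= 1)%N.
    have : (0 < size t)%N by rewrite size_poly_gt0.
    lia.
  have [c Gc] : exists c, G = c%:P by exists G`_0; apply: size1_polyC.
  have nc : c != 0 by apply: contraNneq nG => c0; rewrite Gc c0.
  apply: Q2n1; apply: (congrQ Q2 I2 L2 ((c^-1)%:MP * G')); first by apply: M2.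
  by rewrite phiM !phiC pG' Gc -polyCM mulVf.
have pw : p %| w by have := divQ1 _ QG; rewrite pG' => /dvdp_trans; apply.
have [s' hs'] := lift (w %/ p).
apply: nQ1h; apply: (congrQ Q1 I1 L1 (s' * g0)); first by apply: M1.
by rewrite phiM hs' divpK.
Qed.


Lemma krull_eq1 (X : seq vec) (J : S -> Prop) (y : vec) : good X -> y != 0 ->
  (forall g, IX X g -> J g) -> (forall g, J g -> phi y g = 0) -> krull_dim_quot J = 1%N.
Proof.
move=> [_ nzX _] ny HXJ HJy; apply: nat_maxE; first exact: chain1 HJy.
move=> m [P [HP Hs]]; rewrite leqNgt; apply/negP => hm.
have [pr0 J0] := HP 0%N (leq0n _).
have [pr1 J1] := HP 1%N (ltnW hm).
have [pr2 J2] := HP 2%N hm.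
have [x [xX Hx]] := prime_contains_line pr0 (fun g hg => J0 g (HXJ g hg)).
have [s01 e01] := Hs 0%N (ltn_trans (ltnSn 0) hm).
have [s12 e12] := Hs 1%N hm.
have [I2 n2 _] := pr2.
exact: (line_chain (nzX x xX) pr1 I2 n2 Hx s01 s12 e01 e12).
Qed.

Lemma deg_quotE (X : seq vec) (J : S -> Prop) (Y : seq vec) (y : vec) D0 :
  good X -> good Y -> y \in Y ->
  (forall g, IX X g -> J g) -> (forall g, J g -> forall y, y \in Y -> phi y g = 0) ->
  (forall D, (D0 <= D)%N -> forall g, g \is D.-homog -> (forall y, y \in Y -> ev y g = 0) -> J g) ->
  deg_quot J = (size Y)%:R.
Proof.
move=> gX gY yY HXJ HJY HD.
have [_ nzY _] := gY.
have kr : krull_dim_quot J = 1%N.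
  by apply: (krull_eq1 gX (nzY y yY) HXJ) => g /HJY; apply.
rewrite /deg_quot kr /= mul1r.
set N := maxn D0 (size Y).
have hil : forall d, (N <= d)%N -> hilbert_fun J d = size Y.
  move=> d hd; apply: hilbert_eq => //.
    by apply: leq_trans hd; rewrite leq_maxr.
  by apply: HD; apply: leq_trans hd; rewrite leq_maxl.
have lim : rat_lim (fun d => (hilbert_fun J d)%:R / (d ^ 0)%N%:R) (size Y)%:R.
  move=> eps heps; exists N => d hd; rewrite hil // expn0 divr1 subrr normr0 //.
apply: rat_theE => // b hb.
apply/eqP; apply: NNPP => /negP nb.
have hpos : 0 < `|b - (size Y)%:R| by rewrite normr_gt0 subr_eq0.
have [N1 H1] := hb _ hpos.
have := H1 (maxn N N1) (leq_maxr _ _).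
by rewrite hil ?leq_maxl // expn0 divr1 distrC ltxx.
Qed.


Lemma phiMg v (f g : S) : phi v (f * g) = phi v f * phi v g.
Proof. by rewrite /phi rmorphM. Qed.
Lemma phiDg v (f g : S) : phi v (f + g) = phi v f + phi v g.
Proof. by rewrite /phi raddfD. Qed.
Lemma phiBg v (f g : S) : phi v (f - g) = phi v f - phi v g.
Proof. by rewrite /phi raddfB. Qed.

Lemma homog_ev0 v (g : S) D : g \is D.-homog -> ev v g = 0 -> phi v g = 0.
Proof. by move=> hg he; rewrite (phi_homog v hg) he scale0r. Qed.

Lemma deg_IX (X : seq vec) : good X -> (0 < size X)%N -> deg_quot (IX X) = (size X)%:R.
Proof.
move=> gX hX.
apply: (deg_quotE (y := nth 0 X 0) (D0 := 0%N) gX gX) => //.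
- exact: mem_nth.
- by move=> D _ g hg Hv x xX; apply: (homog_ev0 hg); apply: Hv.
Qed.

Lemma deg_Jadd (X : seq vec) (f : S) d : good X -> f \is d.-homog ->
  (exists x, x \in X /\ ev x f = 0) ->
  deg_quot (Jadd X f) = (card_zeros X f)%:R.
Proof.
move=> gX hf [x0 [x0X fx0]].
set Y := filter (fun v => ev v f == 0) X.
have -> : card_zeros X f = size Y by rewrite size_filter.
apply: (deg_quotE (y := x0) (D0 := (d + size X)%N) gX (good_filter _ gX)).
- by rewrite mem_filter fx0 eqxx.
- by move=> g Hg; exists g, 0; rewrite mul0r addr0.
- move=> g [a [h [Ha ->]]] y; rewrite mem_filter => /andP [/eqP fy yX].
  rewrite phiDg phiMg Ha //.
  by rewrite (homog_ev0 hf fy) mulr0 addr0.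
move=> D hD g hg Hv.
have hdD : (d <= D)%N by apply: leq_trans hD; rewrite leq_addr.
have hle : (size X <= D - d)%N by rewrite leq_subRL // addnC.
have [hh [hhh Hhh]] := @interp X (D - d) (fun v => ev v g / ev v f) gX hle.
set a := g - hh * f.
have ha : a \is D.-homog.
  by rewrite rpredB //; have := dhomogM hhh hf; rewrite subnK.
exists a, hh; split; last by rewrite /a subrK.
move=> x xX; apply: (homog_ev0 ha); rewrite /a evB evM Hhh //.
case: (eqVneq (ev x f) 0) => fx.
  by rewrite fx mulr0 subr0; apply: Hv; rewrite /Y mem_filter fx eqxx xX.
by rewrite divfK // subrr.
Qed.


Lemma notIX_homog (X : seq vec) (f : S) d : f \is d.-homog ->
  (~ IX X f <-> exists x, x \in X /\ ev x f != 0).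
Proof.
move=> hf; split.
  move=> nI; apply: NNPP => H; apply: nI => x xX; apply: (homog_ev0 hf).
  by apply/eqP; apply: NNPP => hn; apply: H; exists x; split => //; exact/negP.
move=> [x [xX fx]] HI; move/negP: fx; apply; apply/eqP.
exact: (homog_phi0 hf (HI x xX)).
Qed.

Lemma Fd_char (X : seq vec) d (f : S) : good X ->
  (Fd (IX X) d f <-> [/\ f \is d.-homog, (exists x, x \in X /\ ev x f != 0) &
     (exists x, x \in X /\ ev x f = 0)]).
Proof.
move=> gX; split.
  move=> [hf nI nc]; split => //; first by apply/(notIX_homog _ hf).
  apply: NNPP => Hz; apply: nc => g; split.
    move=> Hgf x xX; have := Hgf x xX; rewrite phiMg (phi_homog x hf) => /eqP.
    rewrite mulf_eq0 scaler_eq0 expf_eq0 polyX_eq0 andbF orbF => /orP [/eqP //|/eqP fx].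
    by exfalso; apply: Hz; exists x.
  by move=> Hg x xX; rewrite phiMg Hg // mul0r.
move=> [hf nz [x0 [x0X fx0]]]; split => //; first by apply/(notIX_homog _ hf).
move=> H.
have [hg g1 g0] := basisE_spec gX x0X (leqnn (size X)).
set g := basisE X (size X) x0 in hg g1 g0.
have : IX X g.
  apply/(H g) => x xX; rewrite phiMg.
  case: (eqVneq x x0) => [->|nx]; first by rewrite (homog_ev0 hf fx0) mulr0.
  by rewrite (homog_ev0 hg (g0 x xX nx)) mul0r.
move=> Ig; have := homog_phi0 hg (Ig x0 x0X); rewrite g1 => /eqP.
by rewrite oner_eq0.
Qed.


Lemma main_thm (X : seq vec) : proj_set X -> (2 <= size X)%N ->
  forall d : nat, (1 <= d)%N ->
    ((delta_X X d)%:R = delta_I (vanishing_ideal X) d :> rat) /\ (1 <= delta_X X d)%N.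
Proof.
move=> pX h2 d hd; have gX := proj_set_good pX; have [uX nzX sepX] := gX.
have x1X : nth 0 X 0%N \in X by apply: mem_nth; apply: leq_trans h2.
have x2X : nth 0 X 1%N \in X by apply: mem_nth; exact: h2.
have n12 : nth 0 X 1%N != nth 0 X 0%N by rewrite nth_uniq //; apply: leq_trans h2.
have [L [hL eL zL]] := sep_lin (nzX _ x2X) (nzX _ x1X) (sepX _ _ x2X x1X n12).
have [k hk] := nz_coord (nzX _ x2X).
set f0 := L * 'X_k ^+ (d - 1).
have Ff0 : Fd (IX X) d f0.
  apply/(Fd_char _ _ gX); split.
  - by have := dhomogM hL (dhomogMn (d - 1) (Xhomog1 k)); rewrite mul1n subnKC.
  - by exists (nth 0 X 1%N); split => //; rewrite evM evXn evX mulf_neq0 // expf_neq0.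
  - by exists (nth 0 X 0%N); split => //; rewrite evM zL mul0r.
have [M [[fm [Fm cm]] HM]] : exists M, (exists f, Fd (IX X) d f /\ card_zeros X f = M) /\
    forall m, (exists f, Fd (IX X) d f /\ card_zeros X f = m) -> (m <= M)%N.
  apply: (@max_exists _ (size X)); first by exists (card_zeros X f0), f0.
  by move=> n [f [_ <-]]; apply: count_size.
move: (Fm) => /(Fd_char _ _ gX) [hfm [xn [xnX fxn]] [xz [xzX fxz]]].
have Mlt : (M < size X)%N.
  rewrite -cm /card_zeros -(count_predC (fun v => ev v fm == 0) X) -addn1 leq_add2l.
  by rewrite -has_count; apply/hasP; exists xn => //=; rewrite fxn.
have dX : delta_X X d = (size X - M)%N.
  apply: nat_minE.
    exists fm; split => //; last by rewrite cm.
    by rewrite vanishing_IX; have [_ ?] := Fm.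
  move=> m [f [hf nI ->]]; rewrite vanishing_IX in nI; apply: leq_sub2l.
  case: (classic (exists x, x \in X /\ ev x f = 0)) => [Z|NZ].
    apply: HM; exists f; split => //; apply/(Fd_char _ _ gX); split => //.
    exact/(notIX_homog _ hf).
  suff -> : card_zeros X f = 0%N by [].
  rewrite /card_zeros; apply/eqP; rewrite -leqn0 leqNgt -has_count; apply/negP => /hasP [x xX /eqP fx].
  by apply: NZ; exists x.
have dI : delta_I (IX X) d = (size X)%:R - M%:R.
  rewrite /delta_I; destruct (excluded_middle_informative (exists f, Fd (IX X) d f)) as [Ex|nE]; last first.
    by exfalso; apply: nE; exists f0.
  rewrite deg_IX //; last by apply: leq_trans h2.
  congr (_ - _); apply: rat_maxE.
    exists fm; split => //; rewrite ideal_add_Jadd (deg_Jadd gX hfm) ?cm //.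
    by exists xz.
  move=> b [f [Ff ->]]; move: (Ff) => /(Fd_char _ _ gX) [hf _ Z].
  rewrite ideal_add_Jadd (deg_Jadd gX hf Z) ler_nat; apply: HM; exists f; done.
rewrite vanishing_IX dX dI natrB ?(ltnW Mlt) //; split => //.
by rewrite subn_gt0.
Qed.

End Main.

Theorem theorem4p7 (K : fieldType) (s : nat) (X : seq 'rV[K]_s) :
  proj_set X -> (2 <= size X)%N ->
  forall d : nat, (1 <= d)%N ->
    ((delta_X X d)%:R = delta_I (vanishing_ideal X) d :> rat) /\ (1 <= delta_X X d)%N.
Proof. exact: main_thm. Qed.
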